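(* Let $N, M \in \mathrm{GL}(3,\mathbb{Z})$ satisfy: (i) $NM = MN$; (ii) $1$ is an eigenvalue of $N^n M^m$ for all $(n,m) \in \mathbb{Z}^2$; (iii) $\{k \in \mathbb{Z}^3 : N^n M^m k = k \text{ for all } (n,m) \in \mathbb{Z}^2\} = \{0\}$. Then there exist $P \in \mathrm{GL}(3,\mathbb{Z})$ and integers $a,b,c,d$ such that $$P N P^{-1} = \begin{bmatrix} 1 & a & b \\ 0 & -1 & 0 \\ 0 & 0 & -1 \end{bmatrix}, \quad P M P^{-1} = \begin{bmatrix} -1 & 0 & c \\ 0 & -1 & d \\ 0 & 0 & 1 \end{bmatrix}.$$ In particular, the subgroup of $\mathrm{GL}(3,\mathbb{Z})$ generated by $N$ and $M$ is isomorphic to the Klein four-group. *)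

(* Defs.v *)
From mathcomp Require Import all_boot all_order all_algebra.
Set Implicit Arguments. Unset Strict Implicit. Unset Printing Implicit Defensive.
Import Order.TTheory GRing.Theory Num.Theory.
Local Open Scope ring_scope.

Definition mx3 (a00 a01 a02 a10 a11 a12 a20 a21 a22 : int) : 'M[int]_3 :=
  \matrix_(i < 3, j < 3)
    nth 0 (nth [::] [:: [:: a00; a01; a02]; [:: a10; a11; a12]; [:: a20; a21; a22]] i) j.

Definition GL3Z (A : 'M[int]_3) : bool := A \in unitmx.

(* 1 is an eigenvalue of the integer matrix A (over Q, equivalently over C). *)
Definition has_eigenvalue_one (A : 'M[int]_3) : Prop :=
  eigenvalue (map_mx (fun z : int => z%:~R : rat) A) 1.

(* Main.v *)
Require Import Defs.
From mathcomp Require Import all_boot all_order all_algebra.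
From mathcomp Require Import ring lra zify.
Set Implicit Arguments. Unset Strict Implicit. Unset Printing Implicit Defensive.
Import Order.TTheory GRing.Theory Num.Theory.
Local Open Scope ring_scope.

Definition o0 : 'I_3 := @Ordinal 3 0 isT.
Definition o1 : 'I_3 := @Ordinal 3 1 isT.
Definition o2 : 'I_3 := @Ordinal 3 2 isT.

Definition M3 {R : Type} (a b c d e f g h i : R) : 'M[R]_3 :=
  \matrix_(x < 3, y < 3)
   match nat_of_ord x, nat_of_ord y with
   | 0, 0 => a | 0, 1 => b | 0, _ => c
   | 1, 0 => d | 1, 1 => e | 1, _ => f
   | _, 0 => g | _, 1 => h | _, _ => i end.

Lemma ord3P (P : 'I_3 -> Prop) : P o0 -> P o1 -> P o2 -> forall i, P i.
Proof.
move=> H0 H1 H2 [[|[|[|k]]] Hk] //.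
- by have -> : Ordinal Hk = o0 by apply: val_inj.
- by have -> : Ordinal Hk = o1 by apply: val_inj.
- by have -> : Ordinal Hk = o2 by apply: val_inj.
Qed.

Lemma M3E {R : Type} (X : 'M[R]_3) :
  X = M3 (X o0 o0) (X o0 o1) (X o0 o2) (X o1 o0) (X o1 o1) (X o1 o2)
         (X o2 o0) (X o2 o1) (X o2 o2).
Proof.
apply/matrixP; elim/ord3P => [] /=; elim/ord3P => []; by rewrite mxE.
Qed.

Lemma M3_inj {R : Type} (a b c d e f g h i a' b' c' d' e' f' g' h' i' : R) :
  M3 a b c d e f g h i = M3 a' b' c' d' e' f' g' h' i' ->
  (a = a' /\ b = b' /\ c = c') /\ (d = d' /\ e = e' /\ f = f') /\ (g = g' /\ h = h' /\ i = i').
Proof.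
move/matrixP=> H.
have H00 := H o0 o0; have H01 := H o0 o1; have H02 := H o0 o2.
have H10 := H o1 o0; have H11 := H o1 o1; have H12 := H o1 o2.
have H20 := H o2 o0; have H21 := H o2 o1; have H22 := H o2 o2.
rewrite !mxE /= in H00 H01 H02 H10 H11 H12 H20 H21 H22.
by do !split.
Qed.

Section Ring.
Variable R : comRingType.

Lemma sum3 (F : 'I_3 -> R) : \sum_(k < 3) F k = F o0 + F o1 + F o2.
Proof.
rewrite !big_ord_recr big_ord0 /= add0r.
congr (_ + _ + _); congr F; apply: val_inj => //.
Qed.

Lemma M3_mul (a b c d e f g h i a' b' c' d' e' f' g' h' i' : R) :
  M3 a b c d e f g h i *m M3 a' b' c' d' e' f' g' h' i' =
  M3 (a*a' + b*d' + c*g') (a*b' + b*e' + c*h') (a*c' + b*f' + c*i')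
     (d*a' + e*d' + f*g') (d*b' + e*e' + f*h') (d*c' + e*f' + f*i')
     (g*a' + h*d' + i*g') (g*b' + h*e' + i*h') (g*c' + h*f' + i*i').
Proof.
apply/matrixP; elim/ord3P; elim/ord3P; rewrite !mxE sum3 !mxE //.
Qed.

Lemma M3_add (a b c d e f g h i a' b' c' d' e' f' g' h' i' : R) :
  M3 a b c d e f g h i + M3 a' b' c' d' e' f' g' h' i' =
  M3 (a+a') (b+b') (c+c') (d+d') (e+e') (f+f') (g+g') (h+h') (i+i').
Proof. apply/matrixP; elim/ord3P; elim/ord3P; by rewrite !mxE. Qed.

Lemma M3_opp (a b c d e f g h i : R) :
  - M3 a b c d e f g h i = M3 (-a) (-b) (-c) (-d) (-e) (-f) (-g) (-h) (-i).
Proof. apply/matrixP; elim/ord3P; elim/ord3P; by rewrite !mxE. Qed.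

Lemma M3_scal (x : R) : x%:M = M3 x 0 0 0 x 0 0 0 x :> 'M[R]_3.
Proof. apply/matrixP; elim/ord3P; elim/ord3P; by rewrite !mxE. Qed.

Lemma M3_tr (a b c d e f g h i : R) : \tr (M3 a b c d e f g h i) = a + e + i.
Proof. by rewrite /mxtrace sum3 !mxE. Qed.

Lemma M3_trmx (a b c d e f g h i : R) :
  (M3 a b c d e f g h i)^T = M3 a d g b e h c f i.
Proof. apply/matrixP; elim/ord3P; elim/ord3P; by rewrite !mxE. Qed.

Lemma M3_det (a b c d e f g h i : R) :
  \det (M3 a b c d e f g h i) = a*e*i - a*f*h - b*d*i + b*f*g + c*d*h - c*e*g.
Proof.
rewrite (expand_det_row _ o0) sum3 /cofactor.
rewrite !(expand_det_row _ 0) !big_ord_recr !big_ord0 /cofactor !det_mx11 !mxE /=.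
rewrite !expr0 !expr1 !exprS !expr0.
ring.
Qed.

End Ring.

Definition R3 {R : Type} (a b c : R) : 'rV[R]_3 :=
  \row_(y < 3) match nat_of_ord y with 0 => a | 1 => b | _ => c end.

Lemma R3E {R : Type} (v : 'rV[R]_3) : v = R3 (v 0 o0) (v 0 o1) (v 0 o2).
Proof. apply/rowP; elim/ord3P; by rewrite mxE. Qed.

Lemma R3_inj {R : Type} (a b c a' b' c' : R) :
  R3 a b c = R3 a' b' c' -> a = a' /\ b = b' /\ c = c'.
Proof.
move/rowP=> H; have H0 := H o0; have H1 := H o1; have H2 := H o2.
by rewrite !mxE in H0 H1 H2.
Qed.

Lemma row_M3 {R : Type} (a b c d e f g h i : R) :
  [/\ row o0 (M3 a b c d e f g h i) = R3 a b c,
      row o1 (M3 a b c d e f g h i) = R3 d e f &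
      row o2 (M3 a b c d e f g h i) = R3 g h i].
Proof. by split; apply/rowP; elim/ord3P; rewrite !mxE. Qed.

Lemma M3_rows {R : Type} (X : 'M[R]_3) (a b c d e f g h i : R) :
  row o0 X = R3 a b c -> row o1 X = R3 d e f -> row o2 X = R3 g h i ->
  X = M3 a b c d e f g h i.
Proof.
move=> /rowP H0 /rowP H1 /rowP H2.
have E0 : forall j, X o0 j = R3 a b c 0 j by move=> j; rewrite -H0 mxE.
have E1 : forall j, X o1 j = R3 d e f 0 j by move=> j; rewrite -H1 mxE.
have E2 : forall j, X o2 j = R3 g h i 0 j by move=> j; rewrite -H2 mxE.
apply/matrixP; elim/ord3P; elim/ord3P; by rewrite ?E0 ?E1 ?E2 !mxE.
Qed.

Section Ring2.
Variable R : comRingType.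

Lemma R3_mul (x y z a b c d e f g h i : R) :
  R3 x y z *m M3 a b c d e f g h i =
  R3 (x*a + y*d + z*g) (x*b + y*e + z*h) (x*c + y*f + z*i).
Proof. apply/rowP; elim/ord3P; by rewrite !mxE sum3 !mxE. Qed.

Lemma R3_scale (k a b c : R) : k *: R3 a b c = R3 (k*a) (k*b) (k*c).
Proof. apply/rowP; elim/ord3P; by rewrite !mxE. Qed.

Lemma M3_sub (a b c d e f g h i a' b' c' d' e' f' g' h' i' : R) :
  M3 a b c d e f g h i - M3 a' b' c' d' e' f' g' h' i' =
  M3 (a-a') (b-b') (c-c') (d-d') (e-e') (f-f') (g-g') (h-h') (i-i').
Proof. apply/matrixP; elim/ord3P; elim/ord3P; by rewrite !mxE. Qed.

End Ring2.
Definition nocommon (A B : 'M[rat]_3) :=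
  forall v : 'rV[rat]_3, v *m A = v -> v *m B = v -> v = 0.

Lemma fixE (A : 'M[rat]_3) (v : 'rV_3) :
  (v <= kermx (A - 1%:M))%MS = (v *m A == v).
Proof. by rewrite sub_kermx mulmxBr mulmx1 subr_eq0. Qed.

Lemma det0_fix (A : 'M[rat]_3) : \det (A - 1%:M) = 0 ->
  exists2 v : 'rV_3, v != 0 & v *m A = v.
Proof.
move/eqP/det0P=> [v v0 vA]; exists v => //.
by apply/eqP; rewrite -subr_eq0 -[v in _ - v]mulmx1 -mulmxBr vA.
Qed.

Lemma dim1 (A B : 'M[rat]_3) : A *m B = B *m A -> \det (B - 1%:M) = 0 ->
  \det (A *m B - 1%:M) = 0 -> nocommon A B ->
  forall u v : 'rV_3, u *m A = u -> v *m A = v -> u != 0 -> exists c, v = c *: u.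
Proof.
move=> AB dB dAB nc u v uA vA u0.
pose FN := kermx (A - 1%:M); pose FM := kermx (B - 1%:M).
have capE : forall x : 'rV_3, (x <= FN)%MS -> (x <= FM)%MS -> x = 0.
  by move=> x; rewrite !fixE => /eqP xA /eqP xB; apply: nc.
have rk : (\rank FN <= 1)%N.
  rewrite leqNgt; apply/negP => rk2.
  have FM0 : FM != 0.
    by rewrite /FM kermx_eq0 row_free_unit unitmxE unitfE dB eqxx.
  have cap0 : (FN :&: FM)%MS = 0.
    have [//|/rowV0Pn [x]] := eqVneq (FN :&: FM)%MS 0.
    by rewrite sub_capmx => /andP [x1 x2] /eqP []; apply: capE.
  have full : row_full (FN + FM)%MS.
    rewrite /row_full eqn_leq rank_leq_col /=.
    have := mxrank_sum_cap FN FM; rewrite cap0 mxrank0 addn0 => ->.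
    move: FM0; rewrite -mxrank_eq0 => rM.
    move: rk2 rM. lia.
  have [x x0 xAB] := det0_fix dAB.
  have := submx_full x full => /sub_addsmxP [[r1 r2] /= xE].
  set a := r1 *m FN in xE; set b := r2 *m FM in xE.
  have aA : a *m A = a by apply/eqP; rewrite -fixE submxMl.
  have bB : b *m B = b by apply/eqP; rewrite -fixE submxMl.
  have e1 : a *m B + b *m A = a + b.
    rewrite -xE -xAB xE mulmxDl !mulmxA aA -[b *m A *m B]mulmxA AB mulmxA bB.
    by [].
  have dN : (a *m B - a <= FN)%MS.
    by rewrite fixE mulmxBl -mulmxA -AB mulmxA aA.
  have dM : (b - b *m A <= FM)%MS.
    by rewrite fixE mulmxBl bB -mulmxA AB mulmxA bB.
  have e2 : a *m B - a = b - b *m A.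
    by rewrite -[a *m B](addrK (b *m A)) e1 addrAC [a + b]addrC addrK.
  have aB : a *m B = a by apply/eqP; rewrite -subr_eq0; apply/eqP/capE => //; rewrite e2.
  have bA : b *m A = b.
    by apply/eqP; rewrite eq_sym -subr_eq0 -e2 aB subrr.
  have := nc a aA aB; have := nc b bA bB => b0 a0.
  by move: x0; rewrite xE a0 b0 addr0 eqxx.
have uN : (u <= FN)%MS by rewrite fixE uA.
have vN : (v <= FN)%MS by rewrite fixE vA.
have FNu : (FN <= u)%MS.
  have := mxrank_leqif_sup uN => [[_ <-]].
  by rewrite eqn_leq (mxrankS uN) rank_rV u0.
by have /sub_rVP := submx_trans vN FNu.
Qed.

Lemma cross0 (F : fieldType) (a0 a1 a2 b0 b1 b2 : F) :
  a1*b2 - a2*b1 = 0 -> a2*b0 - a0*b2 = 0 -> a0*b1 - a1*b0 = 0 ->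
  R3 a0 a1 a2 != 0 -> exists c, R3 b0 b1 b2 = c *: R3 a0 a1 a2.
Proof.
move=> /eqP; rewrite subr_eq0 => /eqP z0 /eqP; rewrite subr_eq0 => /eqP z1.
move=> /eqP; rewrite subr_eq0 => /eqP z2 nz.

have [a00|a0n] := eqVneq a0 0; last first.
  exists (b0 / a0); rewrite R3_scale; congr R3; first by rewrite divfK.
    by apply: (mulIf a0n); rewrite mulrAC divfK // mulrC z2 mulrC.
  by apply: (mulIf a0n); rewrite mulrAC divfK // mulrC -z1 mulrC.
have [a10|a1n] := eqVneq a1 0; last first.
  exists (b1 / a1); rewrite R3_scale; congr R3.
    by apply: (mulIf a1n); rewrite mulrAC divfK // mulrC -z2 mulrC.
    by rewrite divfK.
  by apply: (mulIf a1n); rewrite mulrAC divfK // mulrC z0 mulrC.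
have [a20|a2n] := eqVneq a2 0; last first.
  exists (b2 / a2); rewrite R3_scale; congr R3.
    by apply: (mulIf a2n); rewrite mulrAC divfK // mulrC z1 mulrC.
    by apply: (mulIf a2n); rewrite mulrAC divfK // mulrC -z0 mulrC.
  by rewrite divfK.
case/eqP: nz; rewrite a00 a10 a20; apply/rowP; elim/ord3P; by rewrite !mxE.
Qed.

Lemma M3_0 {R : nmodType} : (0 : 'M[R]_3) = M3 0 0 0 0 0 0 0 0 0.
Proof. apply/matrixP; elim/ord3P; elim/ord3P; by rewrite !mxE. Qed.

Lemma phase1 (A B : 'M[rat]_3) :
  A *m B = B *m A ->
  \det (A - 1%:M) = 0 -> \det (B - 1%:M) = 0 -> \det (A *m B - 1%:M) = 0 ->
  \det (A - B) = 0 -> \det (A *m A *m B - 1%:M) = 0 ->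
  \det (A *m B *m B - 1%:M) = 0 ->
  nocommon A B ->
  A *m A = 1%:M /\ B *m B = 1%:M /\ \tr A = -1 /\ \tr B = -1 /\
  (A + 1%:M) *m (B + 1%:M) = 0.
Proof.
move=> AB dA dB dAB dAmB dAAB dABB nc.
have ncBA : nocommon B A by move=> v h1 h2; apply: nc.
have dBA : \det (B *m A - 1%:M) = 0 by rewrite -AB.
have [u u0 uA] := det0_fix dA.
have [w w0 wB] := det0_fix dB.
have [mu uB] : exists mu, u *m B = mu *: u.
  by apply: (dim1 AB dB dAB nc uA) => //; rewrite -mulmxA -AB mulmxA uA.
have [nu wA] : exists nu, w *m A = nu *: w.
  by apply: (dim1 (esym AB) dA dBA ncBA wB) => //; rewrite -mulmxA AB mulmxA wB.
have mu1 : mu != 1.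
  by apply/eqP => m1; move: u0; rewrite (nc u uA) ?eqxx // uB m1 scale1r.
have nu1 : nu != 1.
  by apply/eqP => m1; move: w0; rewrite (nc w) ?eqxx // wA m1 scale1r.
have nodep : forall c, w = c *: u -> False.
  move=> c wc; move: w0; rewrite (nc w) ?eqxx //.
  by rewrite wc -scalemxAl uA.
rewrite [u]R3E in u0 uA uB nodep; rewrite [w]R3E in w0 wA wB nodep.
set a0 := u 0 o0 in u0 uA uB nodep; set a1 := u 0 o1 in u0 uA uB nodep.
set a2 := u 0 o2 in u0 uA uB nodep.
set b0 := w 0 o0 in w0 wA wB nodep; set b1 := w 0 o1 in w0 wA wB nodep.
set b2 := w 0 o2 in w0 wA wB nodep.
clearbody a0 a1 a2 b0 b1 b2.
pose T := M3 a0 a1 a2 b0 b1 b2 (a1*b2 - a2*b1) (a2*b0 - a0*b2) (a0*b1 - a1*b0).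
have detT : \det T != 0.
  rewrite /T M3_det.
  apply/eqP => H.
  have S : (a1*b2 - a2*b1)^+2 + (a2*b0 - a0*b2)^+2 + (a0*b1 - a1*b0)^+2 = 0.
    by rewrite -H; ring.
  move: S; set z0 := a1*b2 - a2*b1; set z1 := a2*b0 - a0*b2; set z2 := a0*b1 - a1*b0 => S.
  have z00 : z0 = 0 by nra.
  have z10 : z1 = 0 by nra.
  have z20 : z2 = 0 by nra.
  have [c wc] := cross0 z00 z10 z20 u0.
  exact: (nodep c).
have Tu : T \in unitmx by rewrite unitmxE unitfE.
pose cj X := T *m X *m invmx T.
have cjM X Y : cj (X *m Y) = cj X *m cj Y by rewrite /cj !mulmxA mulmxKV.
have cjB X Y : cj (X - Y) = cj X - cj Y by rewrite /cj mulmxBr mulmxBl.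
have cjD X Y : cj (X + Y) = cj X + cj Y by rewrite /cj mulmxDr mulmxDl.
have cj1 : cj 1%:M = 1%:M by rewrite /cj mulmx1 mulmxV.
have cj0 : cj 0 = 0 by rewrite /cj mulmx0 mul0mx.
have cjdet X : \det (cj X) = \det X.
  by rewrite /cj !det_mulmx det_inv mulrAC mulfV // mul1r.
have cjtr X : \tr (cj X) = \tr X.
  by rewrite /cj mxtrace_mulC mulKmx.
have cjT X : cj X *m T = T *m X by rewrite /cj mulmxKV.
have cjI X Y : cj X = cj Y -> X = Y.
  move=> /(congr1 (mulmx^~ T)); rewrite !cjT => /(congr1 (mulmx (invmx T))).
  by rewrite !mulKmx.
have [rT0 rT1 rT2] := row_M3 a0 a1 a2 b0 b1 b2 (a1*b2 - a2*b1) (a2*b0 - a0*b2) (a0*b1 - a1*b0).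
have [r10 r11 r12] := row_M3 (1 : rat) 0 0 0 1 0 0 0 1.
have rowcj X (i : 'I_3) r : row i T *m X = r *: row i T ->
    row i (cj X) = r *: row i 1%:M.
  by move=> H; rewrite /cj !row_mul H -scalemxAl -row_mul mulmxV.
have EA : cj A = M3 1 0 0 0 nu 0 (cj A o2 o0) (cj A o2 o1) (cj A o2 o2).
  apply: M3_rows.
  - rewrite (@rowcj A o0 1); last by rewrite rT0 uA scale1r.
    by rewrite M3_scal r10 scale1r.
  - rewrite (@rowcj A o1 nu); last by rewrite rT1 wA.
    by rewrite M3_scal r11 R3_scale mulr0 mulr1.
  - by rewrite [LHS]R3E !mxE.
have EB : cj B = M3 mu 0 0 0 1 0 (cj B o2 o0) (cj B o2 o1) (cj B o2 o2).
  apply: M3_rows.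
  - rewrite (@rowcj B o0 mu); last by rewrite rT0 uB.
    by rewrite M3_scal r10 R3_scale mulr0 mulr1.
  - rewrite (@rowcj B o1 1); last by rewrite rT1 wB scale1r.
    by rewrite M3_scal r11 scale1r.
  - by rewrite [LHS]R3E !mxE.
have hAB : cj A *m cj B = cj B *m cj A by rewrite -!cjM AB.
have h11 : \det (cj A *m cj B - 1%:M) = 0 by rewrite -cjM -cj1 -cjB cjdet.
have h1m : \det (cj A - cj B) = 0 by rewrite -cjB cjdet.
have h21 : \det (cj A *m cj A *m cj B - 1%:M) = 0 by rewrite -!cjM -cj1 -cjB cjdet.
have h12 : \det (cj A *m cj B *m cj B - 1%:M) = 0 by rewrite -!cjM -cj1 -cjB cjdet.
have vfix : forall v : 'rV_3, v *m cj A = v -> exists c, v = c *: R3 1 0 0.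
  move=> v vA.
  have vTA : (v *m T) *m A = v *m T by rewrite -mulmxA -cjT mulmxA vA.
  have [c vc] := dim1 AB dB dAB nc uA vTA u0.
  exists c; apply: (can_inj (mulmxK Tu)); rewrite vc -scalemxAl; congr (_ *: _).
  by rewrite /T R3_mul; congr R3; ring.
move: EA EB; set x0 := cj A o2 o0; set x1 := cj A o2 o1; set al := cj A o2 o2.
set y0 := cj B o2 o0; set y1 := cj B o2 o1; set be := cj B o2 o2.
move=> EA EB.
have hM := hAB.
rewrite EA EB M3_scal !M3_mul !M3_sub !M3_det in hM h11 h1m h21 h12.
have [[c00 [c01 c02]] [[c10 [c11 c12]] [c20 [c21 c22]]]] := M3_inj hM.
have e11 : (mu - 1) * (nu - 1) * (al * be - 1) = 0 by rewrite -h11; ring.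
have e1m : (mu - 1) * (nu - 1) * (al - be) = 0 by rewrite -oppr0 -h1m; ring.
have e21 : (mu - 1) * (nu * nu - 1) * (al * al * be - 1) = 0 by rewrite -h21; ring.
have e12 : (mu * mu - 1) * (nu - 1) * (al * be * be - 1) = 0 by rewrite -h12; ring.
have mu1' : mu - 1 != 0 by rewrite subr_eq0.
have nu1' : nu - 1 != 0 by rewrite subr_eq0.
have albe : al * be - 1 = 0.
  by move/eqP: e11; rewrite !mulf_eq0 (negPf mu1') (negPf nu1') /= => /eqP.
have ab : al - be = 0.
  by move/eqP: e1m; rewrite !mulf_eq0 (negPf mu1') (negPf nu1') /= => /eqP.
have beE : be = al by apply/eqP; rewrite eq_sym -subr_eq0 ab.
rewrite beE in albe e21 e12 c20 c21 EB.
have : (al - 1) * (al + 1) = 0 by rewrite -albe; ring.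
move/eqP; rewrite mulf_eq0 => /orP [/eqP al1 | /eqP al1].
  have alE : al = 1 by apply/eqP; rewrite -subr_eq0 al1.
  rewrite alE in c20 c21 EA EB.
  have x00 : x0 * (mu - 1) = 0 by nra.
  have y10 : y1 * (nu - 1) = 0 by nra.
  move/eqP: x00; rewrite mulf_eq0 (negPf mu1') orbF => /eqP x00.
  have vA' : R3 0 x1 (1 - nu) *m cj A = R3 0 x1 (1 - nu).
    by rewrite EA R3_mul x00; congr R3; ring.
  have [c] := vfix _ vA'.
  rewrite R3_scale => hh; have [_ [_ h]] := R3_inj hh.
  by move: nu1; rewrite -subr_eq0 -opprB h mulr0 oppr0 eqxx.
have alE : al = -1 by apply/eqP; rewrite -subr_eq0 opprK al1.
rewrite alE in c20 c21 EA EB e21 e12.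
have nuE : nu = -1.
  have : (nu - 1) * (nu + 1) = 0.
    move/eqP: e21; rewrite !mulf_eq0 (negPf mu1') /=.
    case/orP => /eqP h; first by rewrite -h; ring.
    by move: h; rewrite (_ : -1 * -1 * -1 - 1 = - 2 :> rat) //; ring.
  by move/eqP; rewrite mulf_eq0 (negPf nu1') /= addr_eq0 => /eqP.
have muE : mu = -1.
  have : (mu - 1) * (mu + 1) = 0.
    move/eqP: e12; rewrite !mulf_eq0 (negPf nu1') /= orbF.
    case/orP => /eqP h; first by rewrite -h; ring.
    by move: h; rewrite (_ : -1 * -1 * -1 - 1 = - 2 :> rat) //; ring.
  by move/eqP; rewrite mulf_eq0 (negPf mu1') /= addr_eq0 => /eqP.
rewrite nuE muE in c20 c21 EA EB.
have y00 : y0 = 0 by lra.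
have x10 : x1 = 0 by lra.
rewrite y00 in EB; rewrite x10 in EA.
split; first by apply: cjI; rewrite cjM cj1 EA M3_mul M3_scal; congr M3; ring.
split; first by apply: cjI; rewrite cjM cj1 EB M3_mul M3_scal; congr M3; ring.
split; first by rewrite -cjtr EA M3_tr; ring.
split; first by rewrite -cjtr EB M3_tr; ring.
apply: cjI; rewrite cjM !cjD cj1 cj0 EA EB M3_scal !M3_add M3_mul M3_0.
by congr M3; ring.
Qed.

Lemma smith_arith (d0 d1 d2 k0 k1 k2 : int) : d0*k0*d0 = d0 + d0 -> d1*k1*d1 = d1 + d1 -> d2*k2*d2 = d2+d2 -> k0*d0 + k1*d1 + k2*d2 = 2 -> (d0 = 0 -> d1 = 0) -> (d1 = 0 -> d2 = 0) -> [/\ d1 = 0, d2 = 0 & k0 * d0 = 2].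
Proof.
have h : forall x k : int, x*k*x = x + x -> x = 0 \/ k * x = 2.
  move=> x k H. have : x * (k * x - 2) = 0 by rewrite mulrBr mulrA H; ring.
  by move/eqP; rewrite mulf_eq0 subr_eq0 => /orP [/eqP|/eqP]; [left|right].
move=> /h h0 /h h1 /h h2 t e01 e12.
case: h0 => [z0|k0d0]; first by move: t; rewrite e12 ?e01 // z0; lia.
case: h1 => [z1|k1d1]; last by case: h2 => [z2|k2d2]; move: t; rewrite ?z2; lia.
by split => //; apply: e12.
Qed.

Lemma prim (r s0 : int) : (r != 0) || (s0 != 0) ->
  exists p q u v g : int, [/\ g != 0, r = p * g, s0 = q * g & u * p + v * q = 1].
Proof.
move=> nz; set g := gcdz r s0.
have gn : g != 0 by rewrite gcdz_eq0 negb_and.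
have [u [v Huv]] := Bezoutz r s0.
exists (r %/ g)%Z, (s0 %/ g)%Z, u, v, g; split => //.
- by rewrite divzK // dvdz_gcdl.
- by rewrite divzK // dvdz_gcdr.
apply: (mulIf gn); rewrite mul1r mulrDl -!mulrA !divzK ?dvdz_gcdl ?dvdz_gcdr //; exact: Huv.
Qed.

Lemma mul_eq0_l {g x : int} : g != 0 -> g * x = 0 -> x = 0.
Proof. by move=> gn /eqP; rewrite mulf_eq0 (negPf gn) => /eqP. Qed.

Lemma kernel2 (n11 n12 n21 n22 : int) : n11 + n22 = 0 -> n11*n11 + n12*n21 = 1 ->
  exists p q u v : int, [/\ u * p + v * q = 1, (n11-1)* p + n12* q = 0,
   n21* p + (n22-1)* q = 0 &
   forall s t, (n11-1)* s + n12* t = 0 -> n21* s + (n22-1)* t = 0 -> p* t = q* s].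
Proof.
move=> tr sq.
have n22E : n22 = - n11 by apply/eqP; rewrite -addr_eq0 addrC tr.
have [ab|ab] := boolP ((n12 != 0) || (- (n11 - 1) != 0)).
  have [p [q [u [v [g [gn rE sE uv]]]]]] := @prim _ _ ab.
  exists p, q, u, v; split => //.
  - apply: (mul_eq0_l gn).
    have -> : g * ((n11 - 1) * p + n12 * q) = (n11 - 1) * (p * g) + n12 * (q * g) by ring.
    by rewrite -rE -sE; ring.
  - apply: (mul_eq0_l gn).
    have -> : g * (n21 * p + (n22 - 1) * q) = n21 * (p * g) + (n22 - 1) * (q * g) by ring.
    rewrite -rE -sE n22E.
    have -> : n21 * n12 + (- n11 - 1) * - (n11 - 1) = n11*n11 + n12*n21 - 1 by ring.
    by rewrite sq subrr.
  - move=> s t h1 h2; apply/eqP; rewrite -subr_eq0; apply/eqP; apply: (mul_eq0_l gn).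
    have -> : g * (p * t - q * s) = (p * g) * t - (q * g) * s by ring.
    by rewrite -rE -sE -h1; ring.
move: ab; rewrite negb_or !negbK oppr_eq0 subr_eq0 => /andP [/eqP n120 /eqP n111].
have ab : (n22 - 1 != 0) || (- n21 != 0) by rewrite n22E n111 (_ : -1 - 1 = -2) //.
have [p [q [u [v [g [gn rE sE uv]]]]]] := @prim _ _ ab.
exists p, q, u, v; split => //.
- by rewrite n111 n120; ring.
- apply: (mul_eq0_l gn).
  have -> : g * (n21 * p + (n22 - 1) * q) = n21 * (p * g) + (n22 - 1) * (q * g) by ring.
  by rewrite -rE -sE; ring.
- move=> s t h1 h2; apply/eqP; rewrite -subr_eq0; apply/eqP; apply: (mul_eq0_l gn).
  have -> : g * (p * t - q * s) = (p * g) * t - (q * g) * s by ring.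
  by rewrite -rE -sE -h2; ring.
Qed.

Lemma sorted_dvd (d : seq int) : sorted dvdz d ->
  (d`_0 = 0 -> d`_1 = 0) /\ (d`_1 = 0 -> d`_2 = 0).
Proof.
case: d => [|x [|y [|z s]]] //=.
  by rewrite andbT => h; split => // x0; move: h; rewrite x0 /dvdz dvd0n absz_eq0 => /eqP.
move=> /andP [h1 /andP [h2 _]]; split.
  by move=> x0; move: h1; rewrite x0 /dvdz dvd0n absz_eq0 => /eqP.
by move=> y0; move: h2; rewrite y0 /dvdz dvd0n absz_eq0 => /eqP.
Qed.

Lemma conj_step (E Y Z : 'M[int]_3) : E \in unitmx -> Y *m E = E *m Z ->
  invmx E *m Y = Z *m invmx E.
Proof.
move=> Eu H; apply: (can_inj (mulmxK Eu)).
by rewrite mulmxKV // -mulmxA H mulKmx.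
Qed.

Lemma phase2 (N M : 'M[int]_3) : N *m M = M *m N -> N *m N = 1%:M ->
  M *m M = 1%:M -> \tr N = -1 -> \tr M = -1 ->
  (N + 1%:M) *m (M + 1%:M) = 0 ->
  exists (P : 'M[int]_3) (a b c d : int), [/\ P \in unitmx,
    P *m N = M3 1 a b 0 (-1) 0 0 0 (-1) *m P &
    P *m M = M3 (-1) 0 c 0 (-1) d 0 0 1 *m P].
Proof.
move=> NM NN MM trN trM NM0.
have [L Lu [R Ru [d dsort E]]] := int_Smith_normal_form (M + 1%:M).
pose cj X := R *m X *m invmx R.
have cjM X Y : cj (X *m Y) = cj X *m cj Y by rewrite /cj !mulmxA mulmxKV.
have cjB X Y : cj (X - Y) = cj X - cj Y by rewrite /cj mulmxBr mulmxBl.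
have cjD X Y : cj (X + Y) = cj X + cj Y by rewrite /cj mulmxDr mulmxDl.
have cj1 : cj 1%:M = 1%:M by rewrite /cj mulmx1 mulmxV.
have cj0 : cj 0 = 0 by rewrite /cj mulmx0 mul0mx.
have cjtr X : \tr (cj X) = \tr X by rewrite /cj mxtrace_mulC mulKmx.
have cjT X : cj X *m R = R *m X by rewrite /cj mulmxKV.
set D := \matrix_(i, j) _ in E.
have DE : D = M3 d`_0 0 0 0 d`_1 0 0 0 d`_2.
  by apply/matrixP; elim/ord3P; elim/ord3P; rewrite !mxE /= ?mulr1n ?mulr0n.
pose K := R *m L.
have Ku : K \in unitmx by rewrite unitmx_mul Ru Lu.
have KD : cj (M + 1%:M) = K *m D by rewrite /cj E !mulmxA mulmxK.
have sq : K *m D *m (K *m D) = K *m D + K *m D.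
  rewrite -KD -cjM -cjD; congr cj.
  by rewrite mulmxDr !mulmxDl MM !mulmx1 mul1mx [1%:M + M]addrC.
have DKD : D *m K *m D = D + D.
  apply: (can_inj (mulKmx Ku)); rewrite mulmxDr !mulmxA -sq !mulmxA.
  by [].
have trKD : \tr (K *m D) = 2.
  rewrite -KD cjtr mxtraceD trM mxtrace1. by [].
rewrite [K]M3E DE in DKD trKD.
rewrite !M3_mul M3_add in DKD.
have [[e00 _] [[_ [e11 _]] [_ [_ e22]]]] := M3_inj DKD.
rewrite M3_mul M3_tr in trKD.
have [ds1 ds2] := sorted_dvd dsort.
set k00 := K o0 o0 in e00 trKD; set k11 := K o1 o1 in e11 trKD.
set k22 := K o2 o2 in e22 trKD.
have h0 : d`_0 * k00 * d`_0 = d`_0 + d`_0 by rewrite -e00; ring.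
have h1 : d`_1 * k11 * d`_1 = d`_1 + d`_1 by rewrite -e11; ring.
have h2 : d`_2 * k22 * d`_2 = d`_2 + d`_2 by rewrite -e22; ring.
have t : k00 * d`_0 + k11 * d`_1 + k22 * d`_2 = 2 by rewrite -trKD; ring.
have [d10 d20 k0] := smith_arith h0 h1 h2 t ds1 ds2.
have EM : cj M = M3 1 0 0 (K o1 o0 * d`_0) (-1) 0 (K o2 o0 * d`_0) 0 (-1).
  have -> : cj M = cj (M + 1%:M) - 1%:M by rewrite cjD cj1 addrK.
  rewrite KD {1}[K]M3E DE M3_mul M3_scal M3_sub d10 d20 -/k00.
  by congr M3; rewrite ?mulr0 ?addr0 ?subr0 ?k0 ?sub0r //.
clear h0 h1 h2 t e00 e11 e22 DKD trKD sq.
have hNM : cj N *m cj M = cj M *m cj N by rewrite -!cjM NM.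
have hNN : cj N *m cj N = 1%:M by rewrite -cjM NN cj1.
have htr : \tr (cj N) = -1 by rewrite cjtr.
have hz0 : (cj N + 1%:M) *m (cj M + 1%:M) = 0 by rewrite -cj1 -!cjD -cjM NM0 cj0.
have cNR : cj N *m R = R *m N by rewrite cjT.
have cMR : cj M *m R = R *m M by rewrite cjT.
move: (M3E (cj N)) hNM hNN htr hz0 cNR cMR.
move: (cj N o0 o0) (cj N o0 o1) (cj N o0 o2) (cj N o1 o0) (cj N o1 o1)
  (cj N o1 o2) (cj N o2 o0) (cj N o2 o1) (cj N o2 o2)
  => n00 n01 n02 n10 n11 n12 n20 n21 n22 ->.
rewrite EM.
move: (K o1 o0 * d`_0) (K o2 o0 * d`_0) => m10 m20.
move=> hNM hNN htr hz0 cNR cMR.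
rewrite !M3_mul M3_scal in hNM hNN.
rewrite M3_tr in htr.
rewrite M3_scal !M3_add M3_mul M3_0 in hz0.
have [[_ [e01 e02]] _] := M3_inj hNM.
have [[e00 _] _] := M3_inj hz0.
have [[_ _] [[f10 [f11 f12]] [f20 [f21 f22]]]] := M3_inj hNN.
have n01E : n01 = 0 by lia.
have n02E : n02 = 0 by lia.
rewrite n01E n02E in e00 f11 f12 f21 f22 f10 f20 cNR.
have n00E : n00 = -1 by lia.
rewrite n00E in htr f10 f20 cNR.
have tr2 : n11 + n22 = 0 by lia.
have n22E : n22 = - n11 by lia.
have sq : n11 * n11 + n12 * n21 = 1 by lia.
have [p [q [u [v [uv k1 k2 kpar]]]]] := kernel2 tr2 sq.
pose s := - (n11 + 1) * v + n12 * u.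
pose t := - n21 * v + (n22 + 1) * u.
have ks1 : (n11 - 1) * s + n12 * t = 0.
  have -> : (n11 - 1) * s + n12 * t = - v * (n11 * n11 + n12 * n21 - 1).
    by rewrite /s /t n22E; ring.
  by rewrite sq subrr mulr0.
have ks2 : n21 * s + (n22 - 1) * t = 0.
  have -> : n21 * s + (n22 - 1) * t = u * (n11 * n11 + n12 * n21 - 1).
    by rewrite /s /t n22E; ring.
  by rewrite sq subrr mulr0.
have par_scale : forall s' t', p * t' = q * s' ->
    s' = (s' * u + t' * v) * p /\ t' = (s' * u + t' * v) * q.
  move=> s' t' H; split.
    have -> : (s' * u + t' * v) * p = s' * (u * p) + v * (p * t') by ring.
    rewrite H; have -> : s' * (u * p) + v * (q * s') = s' * (u * p + v * q) by ring.
    by rewrite uv mulr1.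
  have -> : (s' * u + t' * v) * q = u * (q * s') + t' * (v * q) by ring.
  rewrite -H; have -> : u * (p * t') + t' * (v * q) = t' * (u * p + v * q) by ring.
  by rewrite uv mulr1.
have [sa ta] := par_scale _ _ (kpar _ _ ks1 ks2).
have kb1 : (n11 - 1) * n10 + n12 * n20 = 0 by lia.
have kb2 : n21 * n10 + (n22 - 1) * n20 = 0 by lia.
have [sb tb] := par_scale _ _ (kpar _ _ kb1 kb2).
move: sa ta sb tb; move: (s * u + t * v) (n10 * u + n20 * v) => a b sa ta sb tb.
rewrite /s in sa; rewrite /t in ta.
pose c := m10 * u + m20 * v.
pose dd := m20 * p - m10 * q.
have hc1 : m10 = p * c - v * dd by rewrite /c /dd; rewrite -[LHS]mulr1 -uv; ring.
have hc2 : m20 = q * c + u * dd by rewrite /c /dd; rewrite -[LHS]mulr1 -uv; ring.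
move: hc1 hc2; move: c dd => c dd hc1 hc2.
pose Eb := M3 0 0 1 p (-v) 0 q u 0.
have Ebu : Eb \in unitmx.
  rewrite unitmxE /Eb M3_det.
  have -> : 0 * - v * 0 - 0 * 0 * u - 0 * p * 0 + 0 * 0 * q + 1 * p * u - 1 * - v * q
    = u * p + v * q by ring.
  by rewrite uv unitr1.
have NE : M3 (-1) 0 0 n10 n11 n12 n20 n21 n22 *m Eb = Eb *m M3 1 a b 0 (-1) 0 0 0 (-1).
  rewrite /Eb !M3_mul; congr M3; lia.
have ME : M3 1 0 0 m10 (-1) 0 m20 0 (-1) *m Eb = Eb *m M3 (-1) 0 c 0 (-1) dd 0 0 1.
  rewrite /Eb !M3_mul; congr M3; lia.
exists (invmx Eb *m R), a, b, c, dd; split.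
- by rewrite unitmx_mul unitmx_inv Ebu Ru.
- by rewrite -mulmxA -cNR mulmxA (conj_step Ebu NE) mulmxA.
- by rewrite -mulmxA -cMR mulmxA (conj_step Ebu ME) mulmxA.
Qed.

Notation mq := (map_mx (@intmul rat 1)).

Lemma mqE m n (X : 'M[int]_(m, n)) : map_mx (fun z : int => z%:~R : rat) X = mq X.
Proof. by []. Qed.

Lemma mq_inj m n : injective (mq : 'M[int]_(m, n) -> 'M[rat]_(m, n)).
Proof.
move=> X Y /matrixP H; apply/matrixP => i j; move: (H i j); rewrite !mxE.
exact: intr_inj.
Qed.

Lemma eig_det (X : 'M[int]_3) : has_eigenvalue_one X -> \det (X - 1%:M) = 0.
Proof.
rewrite /has_eigenvalue_one mqE /eigenvalue /eigenspace.
rewrite kermx_eq0 row_free_unit unitmxE unitfE negbK.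
rewrite (_ : (1%:M : 'M[rat]_3) = mq 1%:M); last by rewrite map_mx1.
by rewrite -map_mxB det_map_mx /= intr_eq0 => /eqP.
Qed.

Lemma detT (X : 'M[int]_3) : \det ((mq X)^T - 1%:M) = (\det (X - 1%:M))%:~R.
Proof.
rewrite -det_tr.
have -> : ((mq X)^T - 1%:M)^T = mq X - 1%:M.
  by apply/matrixP => i j; rewrite !mxE eq_sym.
rewrite (_ : (1%:M : 'M[rat]_3) = mq 1%:M); last by rewrite map_mx1.
by rewrite -map_mxB det_map_mx.
Qed.

Lemma clear_den (v : 'cV[rat]_3) :
  exists D : int, D != 0 /\ exists k : 'cV[int]_3, mq k = D%:~R *: v.
Proof.
pose d0 := denq (v o0 0); pose d1 := denq (v o1 0); pose d2 := denq (v o2 0).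
exists (d0 * d1 * d2); split.
  by rewrite !mulf_neq0 // denq_neq0.
exists (\matrix_(i < 3, j < 1) match nat_of_ord i with
   | 0 => numq (v o0 0) * d1 * d2 | 1 => d0 * numq (v o1 0) * d2
   | _ => d0 * d1 * numq (v o2 0) end).
apply/matrixP; elim/ord3P => j; rewrite (ord1 j) !mxE /= !intrM numqE; ring.
Qed.

Lemma pow_fix (X : 'M[int]_3) (k : 'cV[int]_3) : X *m k = k ->
  forall n : int, X ^ n *m k = k.
Proof.
move=> H.
have Hp : forall j : nat, X ^+ j *m k = k.
  elim=> [|j IH]; first by rewrite expr0 mul1mx.
  by rewrite exprS -mulmxE -mulmxA IH H.
case=> j; first exact: Hp.
rewrite /exprz.
have [Yu|Yn] := boolP ((X ^+ j.+1) \is a GRing.unit).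
  by rewrite -{1}(Hp j.+1) mulmxA mulmxE mulVr // mul1mx.
by rewrite invr_out // Hp.
Qed.

Lemma mx3_M3 (a b c d e f g h i : int) : mx3 a b c d e f g h i = M3 a b c d e f g h i.
Proof. apply/matrixP; elim/ord3P; elim/ord3P; by rewrite !mxE. Qed.

Lemma trM_l (X Y : 'M[int]_3) : (mq X)^T *m (mq Y)^T = (mq (Y *m X))^T.
Proof. by rewrite -trmx_mul map_mxM. Qed.

Lemma tr_mq (X : 'M[int]_3) : \tr (mq X)^T = (\tr X)%:~R.
Proof.
rewrite mxtrace_tr /mxtrace raddf_sum; apply: eq_bigr => i _; by rewrite mxE.
Qed.

Lemma add1_comm (X Y : 'M[int]_3) : X *m Y = Y *m X ->
  (X + 1%:M) *m (Y + 1%:M) = (Y + 1%:M) *m (X + 1%:M).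
Proof.
move=> H; rewrite !mulmxDl !mulmxDr !mulmx1 !mul1mx H.
by rewrite -!addrA; congr (_ + _); rewrite addrCA.
Qed.

Unset Implicit Arguments.

Theorem lemma2p2 (N M : 'M[int]_3) :
  GL3Z N -> GL3Z M ->
  N * M = M * N ->
  (forall n m : int, has_eigenvalue_one (N ^ n * M ^ m)) ->
  (forall k : 'cV[int]_3,
      (forall n m : int, (N ^ n * M ^ m) *m k = k) -> k = 0) ->
  (exists (P : 'M[int]_3) (a b c d : int),
      GL3Z P /\
      P * N * P^-1 = mx3 1 a b  0 (-1) 0  0 0 (-1) /\
      P * M * P^-1 = mx3 (-1) 0 c  0 (-1) d  0 0 1) /\
  (* "in particular": <N, M> is a Klein four-group *)
  (N * N = 1 /\ M * M = 1 /\ N != 1 /\ M != 1 /\ N != M).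
Proof.
move=> GN GM NMc eig fixH.
have NM : N *m M = M *m N := NMc.
have Mu : M \is a GRing.unit := GM.
have d10 : \det (N - 1%:M) = 0.
  by have := eig_det (eig 1 0); rewrite expr1z expr0z mulr1.
have d01 : \det (M - 1%:M) = 0.
  by have := eig_det (eig 0 1); rewrite expr1z expr0z mul1r.
have d11 : \det (N *m M - 1%:M) = 0.
  by have := eig_det (eig 1 1); rewrite !expr1z.
have d1m : \det (N - M) = 0.
  have := eig_det (eig 1 (-1)); rewrite expr1z exprN1 => h.
  have -> : N - M = (N * M^-1 - 1%:M) *m M.
    by rewrite mulmxBl mul1mx mulmxE divrK.
  by rewrite det_mulmx h mul0r.
have d21 : \det (N *m N *m M - 1%:M) = 0.
  by have := eig_det (eig 2 1); rewrite expr1z -exprnP expr2.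
have d12 : \det (N *m M *m M - 1%:M) = 0.
  by have := eig_det (eig 1 2); rewrite expr1z -exprnP expr2 mulrA.
have hAB : (mq N)^T *m (mq M)^T = (mq M)^T *m (mq N)^T by rewrite !trM_l NM.
have hA : \det ((mq N)^T - 1%:M) = 0 by rewrite detT d10.
have hB : \det ((mq M)^T - 1%:M) = 0 by rewrite detT d01.
have hAB1 : \det ((mq N)^T *m (mq M)^T - 1%:M) = 0 by rewrite trM_l detT -NM d11.
have hAmB : \det ((mq N)^T - (mq M)^T) = 0.
  have -> : (mq N)^T - (mq M)^T = (mq (N - M))^T.
    by apply/matrixP => i j; rewrite !mxE intrB.
  by rewrite det_tr det_map_mx d1m.
have hAAB : \det ((mq N)^T *m (mq N)^T *m (mq M)^T - 1%:M) = 0.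
  by rewrite !trM_l detT mulmxA -NM -mulmxA -NM mulmxA d21.
have hABB : \det ((mq N)^T *m (mq M)^T *m (mq M)^T - 1%:M) = 0.
  by rewrite !trM_l detT -NM mulmxA -NM d12.
have hnc : nocommon (mq N)^T (mq M)^T.
  move=> v vA vB.
  have cA : mq N *m v^T = v^T by have := congr1 trmx vA; rewrite trmx_mul trmxK.
  have cB : mq M *m v^T = v^T by have := congr1 trmx vB; rewrite trmx_mul trmxK.
  have [D [Dn [k kE]]] := clear_den v^T.
  have Nk : N *m k = k by apply: mq_inj; rewrite map_mxM kE -scalemxAr cA.
  have Mk : M *m k = k by apply: mq_inj; rewrite map_mxM kE -scalemxAr cB.
  have k0 : k = 0.
    apply: fixH => n m; rewrite -mulmxE -mulmxA.
    by rewrite (pow_fix Mk) (pow_fix Nk).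
  move: kE; rewrite k0 (_ : mq 0 = 0); last by apply/matrixP => i j; rewrite !mxE.
  move/esym/eqP; rewrite scalemx_eq0 intr_eq0 (negPf Dn) /= => /eqP vT0.
  by apply: trmx_inj; rewrite vT0 trmx0.
have [AA [BB [trA [trB AB0]]]] := phase1 hAB hA hB hAB1 hAmB hAAB hABB hnc.
have tr1 : (1%:M : 'M[rat]_3)  = (mq 1%:M)^T.
  by rewrite map_mx1 trmx1.
have NN : N *m N = 1%:M by apply: mq_inj; apply: trmx_inj; rewrite -trM_l AA tr1.
have MM : M *m M = 1%:M by apply: mq_inj; apply: trmx_inj; rewrite -trM_l BB tr1.
have trN : \tr N = -1.
  by apply: (@intr_inj rat); rewrite -tr_mq trA intrN.
have trM : \tr M = -1.
  by apply: (@intr_inj rat); rewrite -tr_mq trB intrN.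
have NM0 : (N + 1%:M) *m (M + 1%:M) = 0.
  rewrite add1_comm //; apply: mq_inj; apply: trmx_inj.
  rewrite -trM_l (_ : mq 0 = 0); last by apply/matrixP => i j; rewrite !mxE.
  rewrite trmx0 -AB0; congr (_ *m _); apply/matrixP => i j; by rewrite !mxE intrD eq_sym; case: (i == j).
have [P [a [b [c [d [Pu PN PM]]]]]] := phase2 NM NN MM trN trM NM0.
split.
  exists P, a, b, c, d; split => //.
  have Pu' : P \is a GRing.unit := Pu.
  split; rewrite mx3_M3.
    by rewrite -mulmxE PN mulmxE mulrK.
  by rewrite -mulmxE PM mulmxE mulrK.
split => //; split => //.
have tr1' : \tr (1%:M : 'M[int]_3) = 3 by rewrite mxtrace1.
split; [|split].
- by apply/eqP => h; move: trN; rewrite h tr1'.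
- by apply/eqP => h; move: trM; rewrite h tr1'.
apply/eqP => h; move: NM0; rewrite -h mulmxDl !mulmxDr NN !mulmx1 mul1mx => /(congr1 mxtrace).
by rewrite !mxtraceD trN tr1' mxtrace0.
Qed.
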